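(* For $n\ge 1$ and $0<z<1/n$ let $q_n(z) = \sum_{\pi\in S_n} z^{t(\pi)}$. Then \[ q_n(z) = O(\sqrt{n})\,\frac{e^{-n}}{(1-zn)^{1/z}}, \] i.e. there is an absolute constant $C$ such that $q_n(z) \le C\sqrt{n}\,e^{-n}(1-zn)^{-1/z}$ for all $n\ge1$ and $0<z<1/n$.
   Context: For $\pi\in S_n$, $t(\pi)$ is the minimum number of transpositions whose product is $\pi$; equivalently $t(\pi)=s(\pi)-c(\pi)$ where $s(\pi)$ is the number of points moved by $\pi$ and $c(\pi)$ the number of its cycles of length at least 2. *)

(* Defs.v *)
From HB Require Import structures.
From mathcomp Require Import all_boot all_order all_algebra all_fingroup.
From mathcomp Require Import all_classical all_reals all_analysis.
Set Implicit Arguments. Unset Strict Implicit. Unset Printing Implicit Defensive.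
Import Order.TTheory GRing.Theory Num.Theory.

Definition moved_pts (n : nat) (pi : 'S_n) : nat := #|[set x | pi x != x]|.

Definition ncycles2 (n : nat) (pi : 'S_n) : nat :=
  #|[set C in porbits pi | 1 < #|C|]|.

(* t(pi) = s(pi) - c(pi): minimum number of transpositions whose product is pi *)
Definition tnum (n : nat) (pi : 'S_n) : nat := moved_pts pi - ncycles2 pi.

Local Open Scope ring_scope.

Definition qn {R : realType} (n : nat) (z : R) : R := \sum_(pi : 'S_n) z ^+ tnum pi.

(* Main.v *)
Require Import Defs.
From HB Require Import structures.
From mathcomp Require Import all_boot all_order all_algebra all_fingroup.
From mathcomp Require Import all_classical all_reals all_analysis.
From mathcomp Require Import zify ring lra.
Import Order.TTheory GRing.Theory Num.Theory.
Set Implicit Arguments. Unset Strict Implicit. Unset Printing Implicit Defensive.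
Section Comb.
Variable T : finType.
Implicit Types s : {perm T}.

Lemma porbit_fix s x : s x = x -> porbit s x = [set x].
Proof.
move=> sx; apply/setP => y; rewrite inE; apply/porbitP/eqP => [[i ->]|->].
  by rewrite permX_fix.
by exists 0%N; rewrite expg0 perm1.
Qed.

Lemma moved_porbit s x : (s x != x) = (1 < #|porbit s x|)%N.
Proof.
case: (eqVneq (s x) x) => [sx|sx] /=.
  by rewrite porbit_fix // cards1.
have sub : [set x; s x] \subset porbit s x.
  apply/fintype.subsetP => y; rewrite !inE => /orP[] /eqP ->; first exact: porbit_id.
  by have := mem_porbit s 1 x; rewrite expg1.
apply/esym; apply: leq_trans (subset_leq_card sub).
by rewrite cards2 eq_sym sx.
Qed.

Lemma sum_porbit s (Q : pred {set T}) :
  (\sum_(x | Q (porbit s x)) 1 = \sum_(C in porbits s | Q C) #|C|)%N.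
Proof.
rewrite (partition_big (fun x => porbit s x) (fun C => (C \in porbits s) && Q C)) /=; last first.
  by move=> x qx; rewrite imset_f.
apply: eq_bigr => C /andP[/imsetP[y _ ->] qC].
rewrite -sum1_card; apply: eq_bigl => x.
have [e|ne] := eqVneq (porbit s x) (porbit s y).
  by rewrite e qC -eq_porbit_mem e eqxx.
by rewrite -eq_porbit_mem (negbTE ne); case: (Q _).
Qed.

Lemma tnum_porbits s :
  (#|[set x | s x != x]| - #|[set C in porbits s | 1 < #|C|]| = #|T| - #|porbits s|)%N.
Proof.
have hM : #|[set x | s x != x]| = (\sum_(C in porbits s | 1 < #|C|) #|C|)%N.
  rewrite -sum1_card -(sum_porbit s (fun C => 1 < #|C|)%N).
  by apply: eq_bigl => x; rewrite inE moved_porbit.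
have hT : #|T| = (\sum_(C in porbits s) #|C|)%N.
  rewrite -sum1_card (eq_bigl (fun x => predT (porbit s x))) //.
  rewrite (sum_porbit s predT); apply: eq_bigl => C; by rewrite andbT.
have hP2 : #|[set C in porbits s | 1 < #|C|]| = (\sum_(C in porbits s | 1 < #|C|) 1)%N.
  by rewrite -sum1_card; apply: eq_bigl => C; rewrite inE.
have hP : #|porbits s| = (\sum_(C in porbits s | 1 < #|C|) 1 + \sum_(C in porbits s | ~~ (1 < #|C|)) 1)%N.
  by rewrite -sum1_card; apply: bigID.
have hT2 : (\sum_(C in porbits s) #|C| = \sum_(C in porbits s | 1 < #|C|) #|C| + \sum_(C in porbits s | ~~ (1 < #|C|)) 1)%N.
  apply: etrans; first exact: (bigID (fun C : {set T} => (1 < #|C|)%N)). congr (_ + _)%N.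
  apply: eq_bigr => C /andP[/imsetP[y _ ->]].
  have := card_porbit_neq0 s y; case: #|_| => [|[|]] //.
have hle : (\sum_(C in porbits s | 1 < #|C|) 1 <= \sum_(C in porbits s | 1 < #|C|) #|C|)%N.
  by apply: leq_sum => C /andP[_ h]; apply: ltnW.
rewrite hM hT hP2 hP hT2; lia.
Qed.

Lemma card_porbits1 : #|porbits (1 : {perm T})| = #|T|.
Proof.
rewrite card_imset // => x y; move/eqP; rewrite eq_porbit_mem.
by rewrite porbit_fix ?perm1 // inE => /eqP.
Qed.

Lemma card_porbits_le s : (#|porbits s| <= #|T|)%N.
Proof. exact: leq_imset_card. Qed.

Lemma porbits_mulT s A a j : perm_on A s -> a \notin A ->
  (#|porbits (s * tperm a j)| + (a != j) = #|porbits s|)%N.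
Proof.
move=> hs ha.
have sa : s a = a by apply: out_perm hs ha.
have sia : (s^-1)%g a = a by rewrite -{1}sa perm.permK.
have := porbits_mul_tperm (s^-1)%g a j.
move=> /=; rewrite (porbitsV s) -(porbitsV (tperm a j * s^-1)%g) invMg invgK tpermV.
rewrite porbit_sym porbit_fix // inE eq_sym.
by move=> h; apply/eqP; rewrite -(eqn_add2r (a != j)) -addnA addnn h.
Qed.

Local Open Scope ring_scope.
Variable R : comNzRingType.
Variable z : R.

Definition FF (A : {set T}) : R :=
  \sum_(p : {perm T} | perm_on A p) z ^+ (#|T| - #|porbits p|).

Lemma FF_rec (A : {set T}) (a : T) : a \notin A -> FF (a |: A) = (1 + #|A|%:R * z) * FF A.
Proof.
move=> ha; rewrite /FF.
rewrite (partition_big (fun p : {perm T} => p a) (fun j => j \in a |: A)) /=; last first.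
  by move=> p hp; rewrite perm_closed // setU11.
have inner : forall j, j \in a |: A ->
  \sum_(p : {perm T} | perm_on (a |: A) p && (p a == j)) z ^+ (#|T| - #|porbits p|)
  = z ^+ (a != j) * \sum_(p : {perm T} | perm_on A p) z ^+ (#|T| - #|porbits p|).
  move=> j hj.
  have ht : perm_on (a |: A) (tperm a j).
    apply: fintype.subset_trans (tperm_on a j) _.
    by apply/fintype.subsetP => k; rewrite !inE => /orP[] /eqP ->; rewrite ?eqxx // -(in_setU1).
  rewrite (reindex_onto (fun s => (s * tperm a j)%g) (fun p => (p * tperm a j)%g)); last first.
    by move=> p _; rewrite -mulgA tperm2 mulg1.
  have hP : forall s : {perm T}, (perm_on (a |: A) (s * tperm a j)%g && ((s * tperm a j)%g a == j) &&
      ((s * tperm a j * tperm a j)%g == s)) = perm_on A s.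
    move=> s; rewrite -mulgA tperm2 mulg1 eqxx andbT permM.
    have -> : (tperm a j (s a) == j) = (s a == a).
      by rewrite -[X in _ == X](tpermL a j) (inj_eq perm_inj).
    apply/andP/idP => [[hA /eqP hfix]|hs].
      apply/fintype.subsetP => k; rewrite inE => hk.
      have hsA : perm_on (a |: A) s.
        by have := perm_onM hA ht; rewrite -mulgA tperm2 mulg1.
      have := fintype.subsetP hsA k; rewrite inE => /(_ hk).
      case/setU1P => // ka; by move: hk; rewrite ka hfix eqxx.
    split; last by rewrite (out_perm hs ha).
    apply: perm_onM ht.
    by apply: fintype.subset_trans hs _; apply: finset.subsetUr.
  rewrite (eq_bigl _ _ hP) mulr_sumr; apply: eq_bigr => s hs.
  rewrite -exprD; congr (_ ^+ _).
  have := porbits_mulT j hs ha; have := card_porbits_le s; lia.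
rewrite (eq_bigr _ inner) -mulr_suml; congr (_ * _).
rewrite big_setU1 //= eqxx expr0; congr (_ + _).
rewrite (eq_bigr (fun _ => z)); last first.
  by move=> j hj; have -> : (a != j) by apply: contraNneq ha => ->.
by rewrite sumr_const mulr_natl.
Qed.

Lemma FF_prod n (A : {set T}) : #|A| = n -> FF A = \prod_(k < n) (1 + k%:R * z).
Proof.
elim: n A => [|n IH] A hA.
  rewrite big_ord0 (cards0_eq hA) /FF (big_pred1 (1%g : {perm T})).
    by rewrite card_porbits1 subnn expr0.
  move=> p; apply/idP/eqP => [h|->]; last exact: perm_on1.
  by apply: perm_on_id h _; rewrite cards0.
have : (0 < #|A|)%N by rewrite hA.
rewrite card_gt0 => /set0Pn[a ha].
rewrite -(finset.setD1K ha) FF_rec ?setD11 //.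
have hc : #|A :\ a| = n by have := cardsD1 a A; rewrite ha hA; lia.
by rewrite IH // big_ord_recr /= mulrC hc.
Qed.

End Comb.

Local Open Scope ring_scope.

Lemma qn_prod (R : realType) (n : nat) (z : R) :
  qn n z = \prod_(k < n) (1 + k%:R * z).
Proof.
have hA : #|[set: 'I_n]| = n by rewrite cardsT card_ord.
rewrite -(FF_prod z hA) /qn /FF.
apply: eq_big => [p|p _].
  apply/esym/fintype.subsetP => x _; by rewrite inE.
by rewrite /tnum /moved_pts /ncycles2 tnum_porbits.
Qed.

Lemma sum_bound (R : realType) (z : R) (n : nat) : 0 < z -> z * n%:R < 1 ->
  \sum_(k < n) (1 - k%:R * z)^-1 <= - ln (1 - z * n%:R) / z.
Proof.
move=> z0; elim: n => [|n IH] hn.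
  by rewrite big_ord0 mulr0 subr0 ln1 oppr0 mul0r.
have hn' : z * n%:R < 1.
  apply: le_lt_trans hn; rewrite ler_pM2l // ler_nat; lia.
rewrite big_ord_recr /=.
set b := 1 - z * n%:R.
set a := 1 - z * n.+1%:R.
have b0 : 0 < b by rewrite /b subr_gt0.
have a0 : 0 < a by rewrite /a subr_gt0.
have eab : a = b * (1 + - (z / b)).
  rewrite /a /b mulrDr mulr1 mulrN mulrCA divff ?mulr1; last by rewrite gt_eqF.
  by rewrite -natr1 mulrDr mulr1 /b; lra.
have hzb : -1 < - (z / b).
  rewrite ltrN2 ltr_pdivrMr // mul1r /b.
  by move: a0; rewrite /a -natr1 mulrDr mulr1; lra.
have key : ln a <= ln b - z / b.
  have la : ln a = ln b + ln (1 + - (z / b)).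
    rewrite -lnM ?posrE -?eab //; lra.
  by have := le_ln1Dx hzb; lra.
have e1 : (1 - n%:R * z)^-1 = (z / b) / z.
  by rewrite mulrAC divff ?mul1r ?gt_eqF // /b mulrC.
rewrite e1.
have h2 : (z / b) / z <= (ln b - ln a) / z.
  by apply: ler_wpM2r; [rewrite invr_ge0 ltW | lra].
have e3 : (ln b - ln a) / z = - ln a / z - (- ln b / z).
  by rewrite mulrBl !mulNr opprK addrC.
move: (IH hn') h2; rewrite e3; lra.
Qed.

Theorem lemma4 (R : realType) :
  exists C : R, forall (n : nat) (z : R),
    (1 <= n)%N -> 0 < z -> z < n%:R^-1 ->
    qn n z <= C * Num.sqrt n%:R * expR (- n%:R) * powR (1 - z * n%:R) (- z^-1).
Proof.
exists 1 => n z n1 z0 zn.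
have n0 : 0 < n%:R :> R by rewrite ltr0n.
have hzn : z * n%:R < 1 by move: zn; rewrite -(ltr_pM2r n0) mulVf ?gt_eqF.
have hb : 0 < 1 - z * n%:R by rewrite subr_gt0.
rewrite qn_prod.
have step1 : \prod_(k < n) (1 + k%:R * z) <= \prod_(k < n) expR ((1 - k%:R * z)^-1 - 1).
  apply: ler_prod => k _.
  have hk : k%:R * z < 1.
    apply: le_lt_trans hzn; rewrite mulrC ler_pM2l // ler_nat; exact: ltnW.
  have c0 : 0 < 1 - k%:R * z by rewrite subr_gt0.
  apply/andP; split; first by apply: addr_ge0 => //; apply: mulr_ge0 => //; exact: ltW.
  apply: le_trans (expR_ge1Dx _) _; rewrite ler_expR.
  set c := 1 - k%:R * z.
  have -> : k%:R * z = 1 - c by rewrite /c; lra.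
  rewrite -subr_ge0.
  have -> : c^-1 - 1 - (1 - c) = (1 - c) ^+ 2 * c^-1.
    by field; rewrite gt_eqF.
  by apply: mulr_ge0; [exact: sqr_ge0 | rewrite invr_ge0 ltW].
apply: (le_trans step1); rewrite -expR_sum.
have hs : \sum_(k < n) ((1 - k%:R * z)^-1 - 1) <= - n%:R + - z^-1 * ln (1 - z * n%:R).
  rewrite sumrB sumr_const card_ord.
  have := sum_bound z0 hzn.
  rewrite mulNr -mulrN mulrC mulNr mulr_natr; lra.
apply: le_trans (_ : expR (- n%:R + - z^-1 * ln (1 - z * n%:R)) <= _).
  by rewrite ler_expR.
rewrite expRD mul1r -mulrA.
have -> : expR (- z^-1 * ln (1 - z * n%:R)) = powR (1 - z * n%:R) (- z^-1).
  by rewrite /powR gt_eqF.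
rewrite -[X in X <= _]mul1r.
apply: ler_wpM2r; first by apply: mulr_ge0; [exact: expR_ge0 | exact: powR_ge0].
have h1 : (1 : R) <= n%:R by rewrite ler1n.
have := h1; rewrite -(ler_sqrt 1 (ler0n R n)) sqrtr1.
by [].
Qed.
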